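(* The sub-set-operad $\mathrm{RWS}_\odot$ of $\mathrm{RWS}$ generated by $A_\succ$, $A_\prec$ and $A_\odot$ consists exactly of the recursively labelled red and white trees in which every node has at most one label and which avoid the two patterns: (i) no node with a nonempty label set has a red child; (ii) no white node has two (or more) red children.
   Context: Red and white trees: $\mathrm{RW}(n)$ is the set of finite rooted trees (children unordered) whose nodes $z$ carry possibly empty label sets $L(z)\subseteq[n]$ partitioning $[n]$, each empty node having at least two children; labelled nodes are white, an empty node is red iff all its children are white (so an empty white node has a red child). Composition $T_1\circ_xT_2$ ($T_1\in\mathrm{RW}(m)$, $T_2\in\mathrm{RW}(n)$): relabel $T_1$ by $y\mapsto y+n-1$ for $y>x$ and $T_2$ by $y\mapsto y+x-1$; $z\ni x$ in $T_1$, $r$ = root of $T_2$. (W) $r$ not red: remove $x$ from $L(z)$, add $L(r)$ to $L(z)$, children of $r$ become children of $z$. (R1) $r$ red, $T_1$ the single node $\{x\}$: result $T_2$. (R2) $r$ red and ($z$ has a child or $|L(z)|\ge2$): remove $x$ from $L(z)$, attach $T_2$ as child subtree of $z$. (R3) $r$ red, $z$ non-root leaf with $L(z)=\{x\}$: delete $z$, children of $r$ become children of the parent of $z$. Colours recomputed. A tree is recursively labelled if for each node the union of label sets in its subtree is an interval of integers. $\mathrm{RWS}$ is the sub-set-operad generated by $A_\mu$ (single node $\{1,2\}$), $A_\prec$ (root $\{1\}$ with child $\{2\}$), $A_\succ$ (root $\{2\}$ with child $\{1\}$), $A_\odot$ (empty red root with children $\{1\},\{2\}$). *)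

(* Defs.v *)
From mathcomp Require Import all_boot.
Require Stdlib.Lists.List.
Set Implicit Arguments. Unset Strict Implicit. Unset Printing Implicit Defensive.

(* A rooted tree whose nodes carry a label list (read as a set) and a list of
   children (read as a multiset: children are unordered, see [tequiv]). *)
Inductive rwtree := RWNode of seq nat & seq rwtree.

Definition rlabels (t : rwtree) : seq nat := let: RWNode L _ := t in L.
Definition rchildren (t : rwtree) : seq rwtree := let: RWNode _ cs := t in cs.

Fixpoint tlabels (t : rwtree) : seq nat :=
  match t with RWNode L cs => L ++ flatten (map tlabels cs) end.

Fixpoint subtrees (t : rwtree) : seq rwtree :=
  match t with RWNode L cs => t :: flatten (map subtrees cs) end.

Fixpoint red (t : rwtree) : bool :=
  match t with RWNode L cs => nilp L && all (fun c => ~~ red c) cs end.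
Definition white (t : rwtree) : bool := ~~ red t.

Definition RW (n : nat) (t : rwtree) : Prop :=
  perm_eq (tlabels t) (iota 1 n) /\
  (forall u, List.In u (subtrees t) -> nilp (rlabels u) -> 2 <= size (rchildren u)).

Inductive tequiv : rwtree -> rwtree -> Prop :=
| tq_refl t : tequiv t t
| tq_sym s t : tequiv s t -> tequiv t s
| tq_trans s t u : tequiv s t -> tequiv t u -> tequiv s u
| tq_labels L1 L2 cs : perm_eq L1 L2 -> tequiv (RWNode L1 cs) (RWNode L2 cs)
| tq_swap L cs1 c c' cs2 :
    tequiv (RWNode L (cs1 ++ c :: c' :: cs2)) (RWNode L (cs1 ++ c' :: c :: cs2))
| tq_cong L cs1 c c' cs2 : tequiv c c' ->
    tequiv (RWNode L (cs1 ++ c :: cs2)) (RWNode L (cs1 ++ c' :: cs2)).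

Fixpoint relabel (f : nat -> nat) (t : rwtree) : rwtree :=
  match t with RWNode L cs => RWNode (map f L) (map (relabel f) cs) end.

Definition shift1 (x n y : nat) : nat := if x < y then y + n - 1 else y.
Definition shift2 (x y : nat) : nat := y + x - 1.

(* Cases (W) and (R2) at the node z = RWNode L cs containing x,
   T2 being the (relabelled) second argument with root r. *)
Definition node_op (x : nat) (T2 : rwtree) (L : seq nat) (cs : seq rwtree) : rwtree :=
  if ~~ red T2 then RWNode (rem x L ++ rlabels T2) (cs ++ rchildren T2)
  else RWNode (rem x L) (rcons cs T2).

(* grafting at a non-root position; returns the list of trees replacing the
   subtree in its parent's list of children (needed for (R3)). *)
Fixpoint graft (x : nat) (T2 : rwtree) (t : rwtree) : seq rwtree :=
  match t with
  | RWNode L cs =>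
      if x \in L then
        if red T2 && nilp cs && (L == [:: x]) then rchildren T2
        else [:: node_op x T2 L cs]
      else [:: RWNode L (flatten (map (graft x T2) cs))]
  end.

Definition rw_comp (n x : nat) (T1 T2 : rwtree) : rwtree :=
  let T1' := relabel (shift1 x n) T1 in
  let T2' := relabel (shift2 x) T2 in
  match T1' with
  | RWNode L cs =>
      if x \in L then
        if red T2' && nilp cs && (L == [:: x]) then T2'
        else node_op x T2' L cs
      else RWNode L (flatten (map (graft x T2') cs))
  end.

Definition A_unit  : rwtree := RWNode [:: 1] [::].
Definition A_mu    : rwtree := RWNode [:: 1; 2] [::].
Definition A_prec  : rwtree := RWNode [:: 1] [:: RWNode [:: 2] [::]].
Definition A_succ  : rwtree := RWNode [:: 2] [:: RWNode [:: 1] [::]].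
Definition A_odot  : rwtree := RWNode [::] [:: RWNode [:: 1] [::]; RWNode [:: 2] [::]].

(* RWS_odot(n): the sub-set-operad generated by A_succ, A_prec, A_odot
   (it contains the operad unit and is closed under all partial compositions;
   elements are trees up to [tequiv]). *)
Inductive RWS_odot : nat -> rwtree -> Prop :=
| rws_unit : RWS_odot 1 A_unit
| rws_succ : RWS_odot 2 A_succ
| rws_prec : RWS_odot 2 A_prec
| rws_odot : RWS_odot 2 A_odot
| rws_comp m n x T1 T2 : RWS_odot m T1 -> RWS_odot n T2 -> 1 <= x <= m ->
    RWS_odot (m + n - 1) (rw_comp n x T1 T2)
| rws_equiv n T T' : RWS_odot n T -> tequiv T T' -> RWS_odot n T'.

Definition is_interval (s : seq nat) : Prop := exists a b, s =i iota a b.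
Definition rec_labelled (t : rwtree) : Prop :=
  forall u, List.In u (subtrees t) -> is_interval (tlabels u).

Definition at_most_one_label (t : rwtree) : Prop :=
  forall u, List.In u (subtrees t) -> size (rlabels u) <= 1.

Definition avoids_pattern_i (t : rwtree) : Prop :=
  forall u, List.In u (subtrees t) -> ~~ nilp (rlabels u) ->
    all white (rchildren u).

Definition avoids_pattern_ii (t : rwtree) : Prop :=
  forall u, List.In u (subtrees t) -> white u -> count red (rchildren u) <= 1.

(* Main.v *)
Require Import Defs.
From mathcomp Require Import all_boot zify.
Require Stdlib.Sorting.Permutation.
Set Implicit Arguments. Unset Strict Implicit. Unset Printing Implicit Defensive.

Fixpoint rw_ind_f (P : rwtree -> Prop)
  (H : forall L cs, (forall c, List.In c cs -> P c) -> P (RWNode L cs)) (t : rwtree) : P t :=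
  match t with RWNode L cs => H L cs
    ((fix F (s : seq rwtree) : forall c, List.In c s -> P c :=
       match s with
       | [::] => fun c (hc : List.In c [::]) => False_ind _ hc
       | d :: s' => fun c hc => match hc with
                    | or_introl e => eq_ind d P (rw_ind_f H d) c e
                    | or_intror h => F s' c h end
       end) cs)
  end.

Definition AS (P : rwtree -> Prop) t := forall u, List.In u (subtrees t) -> P u.

Lemma in_flatten_map (A B : Type) (F : A -> seq B) (s : seq A) u :
  List.In u (flatten (map F s)) <-> exists c, List.In c s /\ List.In u (F c).
Proof.
elim: s => [|c s IH] /=; first by split => //; case=> c [].
rewrite List.in_app_iff IH; split.
- by case=> [h|[d [h1 h2]]]; [exists c; auto | exists d; auto].
- by case=> d [[<-|h1] h2]; [left | right; exists d].
Qed.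

Lemma AS_node P L cs : AS P (RWNode L cs) <->
  P (RWNode L cs) /\ (forall c, List.In c cs -> AS P c).
Proof.
rewrite /AS /=; split.
- move=> H; split; first by apply: H; left.
  move=> c hc u hu; apply: H; right; apply/in_flatten_map; by exists c.
- case=> H1 H2 u [<-|/in_flatten_map [c [hc hu]]] //; exact: H2 hc _ hu.
Qed.

Lemma AS_impl (P Q : rwtree -> Prop) t : (forall u, P u -> Q u) -> AS P t -> AS Q t.
Proof. by move=> H A u hu; apply/H/A. Qed.

Lemma AS_and (P Q : rwtree -> Prop) t : AS P t -> AS Q t -> AS (fun u => P u /\ Q u) t.
Proof. by move=> A B u hu; split; [apply: A | apply: B]. Qed.

Lemma mem_flatten_In (A : Type) (F : A -> seq nat) cs c y :
  List.In c cs -> y \in F c -> y \in flatten (map F cs).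
Proof.
elim: cs => //= d cs IH [->|h] hy; rewrite mem_cat ?hy //.
by rewrite IH ?orbT.
Qed.

Lemma mem_flatten_In' (A : Type) (F : A -> seq nat) cs y :
  y \in flatten (map F cs) -> exists c, List.In c cs /\ y \in F c.
Proof.
elim: cs => //= d cs IH; rewrite mem_cat => /orP[h|/IH [c [h1 h2]]].
- by exists d; auto.
- by exists c; auto.
Qed.

Lemma AS_sub t : AS (fun u => {subset tlabels u <= tlabels t}) t.
Proof.
elim/rw_ind_f: t => L cs IH; apply/AS_node; split => // c hc.
apply: AS_impl (IH c hc) => u hu y /hu yc /=; rewrite mem_cat; apply/orP; right.
exact: mem_flatten_In hc yc.
Qed.

Definition Loc (u : rwtree) : Prop :=
  [/\ size (rlabels u) <= 1, nilp (rlabels u) -> 1 < size (rchildren u),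
      ~~ nilp (rlabels u) -> all white (rchildren u) & count red (rchildren u) <= 1].
Definition GL u := Loc u /\ is_interval (tlabels u).
Definition good n T := perm_eq (tlabels T) (iota 1 n) /\ AS GL T.

Lemma count_red0 cs : all white cs -> count red cs = 0.
Proof. by elim: cs => //= c cs IH /andP[/negbTE -> /IH ->]. Qed.

Lemma valid_good n T :
  [/\ RW n T, rec_labelled T, at_most_one_label T,
      avoids_pattern_i T & avoids_pattern_ii T] <-> good n T.
Proof.
split.
- case=> [[hp h2] hr h1 hi hii]; split => // u hu; split; last exact: hr.
  split; [exact: h1 | exact: h2 | exact: hi |].
  case: u hu => L cs hu /=.
  case hw: (white (RWNode L cs)); first by apply: hii hu hw.
  move/negbFE: hw => /= /andP[_ /count_red0 ->] //.
- case=> hp hg; split.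
  + by split => // u /hg [[]].
  + by move=> u /hg [].
  + by move=> u /hg [[]].
  + by move=> u /hg [[]].
  + by move=> u /hg [[]].
Qed.
Lemma all_white_count cs : all white cs = (count red cs == 0).
Proof. elim: cs => //= c cs IH; rewrite IH /white; by case: (red c). Qed.

Lemma Loc_iff L1 L2 cs1 cs2 : size L1 = size L2 -> size cs1 = size cs2 ->
  count red cs1 = count red cs2 ->
  Loc (RWNode L1 cs1) <-> Loc (RWNode L2 cs2).
Proof.
move=> e1 e2 e3; rewrite /Loc /= !all_white_count /nilp e1 e2 e3; done.
Qed.

Lemma int_perm s s' : perm_eq s s' -> is_interval s -> is_interval s'.
Proof. by move=> /perm_mem hp [a [b h]]; exists a, b => y; rewrite -hp h. Qed.

Lemma GL_iff L1 L2 cs1 cs2 : size L1 = size L2 -> size cs1 = size cs2 ->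
  count red cs1 = count red cs2 ->
  perm_eq (tlabels (RWNode L1 cs1)) (tlabels (RWNode L2 cs2)) ->
  GL (RWNode L1 cs1) <-> GL (RWNode L2 cs2).
Proof.
move=> e1 e2 e3 hp; rewrite /GL (Loc_iff e1 e2 e3); split; case=> h1 h2; split => //.
- exact: int_perm h2.
- by apply: int_perm h2; rewrite perm_sym.
Qed.

Lemma tequiv_inv s t : tequiv s t ->
  [/\ perm_eq (tlabels s) (tlabels t), red s = red t & (AS GL s <-> AS GL t)].
Proof.
elim => {s t}.
- by move=> t; split.
- by move=> s t _ [h1 h2 h3]; split; rewrite 1?perm_sym // h3.
- move=> s t u _ [h1 h2 h3] _ [h4 h5 h6]; split.
  + exact: perm_trans h1 h4.
  + by rewrite h2.
  + by rewrite h3.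
- move=> L1 L2 cs hp.
  have hpl : perm_eq (tlabels (RWNode L1 cs)) (tlabels (RWNode L2 cs)).
    by rewrite /= perm_cat2r.
  split => //.
  + by rewrite /= /nilp (perm_size hp).
  + rewrite !AS_node (GL_iff (perm_size hp) _ _ hpl) //.
- move=> L cs1 c c' cs2.
  have hin : forall d, List.In d (cs1 ++ c :: c' :: cs2) <-> List.In d (cs1 ++ c' :: c :: cs2).
    by move=> d; rewrite !List.in_app_iff /=; tauto.
  have hpl : perm_eq (tlabels (RWNode L (cs1 ++ c :: c' :: cs2)))
                     (tlabels (RWNode L (cs1 ++ c' :: c :: cs2))).
    by rewrite /= perm_cat2l !map_cat !flatten_cat perm_cat2l /= perm_catCA.
  have hc : count red (cs1 ++ c :: c' :: cs2) = count red (cs1 ++ c' :: c :: cs2).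
    by rewrite !count_cat /=; lia.
  have ha : all white (cs1 ++ c :: c' :: cs2) = all white (cs1 ++ c' :: c :: cs2).
    by rewrite !all_white_count hc.
  split => //.
  + by rewrite /= ha.
  + rewrite !AS_node (GL_iff (erefl _) _ hc hpl); last by rewrite !size_cat.
    split; case=> h1 h2; split => // d /hin; exact: h2.
- move=> L cs1 c c' cs2 _ [h1 h2 h3].
  have hin : forall d, List.In d (cs1 ++ c :: cs2) -> c = d \/ List.In d (cs1 ++ c' :: cs2).
    by move=> d; rewrite !List.in_app_iff /=; tauto.
  have hin' : forall d, List.In d (cs1 ++ c' :: cs2) -> c' = d \/ List.In d (cs1 ++ c :: cs2).
    by move=> d; rewrite !List.in_app_iff /=; tauto.
  have hpl : perm_eq (tlabels (RWNode L (cs1 ++ c :: cs2)))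
                     (tlabels (RWNode L (cs1 ++ c' :: cs2))).
    by rewrite /= perm_cat2l !map_cat !flatten_cat perm_cat2l /= perm_cat2r.
  have hc : count red (cs1 ++ c :: cs2) = count red (cs1 ++ c' :: cs2).
    by rewrite !count_cat /= h2.
  have ha : all white (cs1 ++ c :: cs2) = all white (cs1 ++ c' :: cs2).
    by rewrite !all_white_count hc.
  split => //.
  + by rewrite /= ha.
  + rewrite !AS_node (GL_iff (erefl _) _ hc hpl); last by rewrite !size_cat.
    split; case=> k1 k2; split => // d.
    * case/hin' => [<-|]; last exact: k2.
      by apply/h3/k2; rewrite List.in_app_iff /=; auto.
    * case/hin => [<-|]; last exact: k2.
      by apply/h3/k2; rewrite List.in_app_iff /=; auto.
Qed.

Lemma good_tequiv n s t : tequiv s t -> good n s -> good n t.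
Proof.
move=> /tequiv_inv [h1 _ h3] [k1 k2]; split; last by apply/h3.
by apply: perm_trans k1; rewrite perm_sym.
Qed.

Lemma all_map_In (P : pred rwtree) (g : rwtree -> rwtree) cs :
  (forall c, List.In c cs -> P (g c) = P c) -> all P (map g cs) = all P cs.
Proof. elim: cs => //= c cs IH H; rewrite H; auto; by rewrite IH //; auto. Qed.

Lemma count_map_In (P : pred rwtree) (g : rwtree -> rwtree) cs :
  (forall c, List.In c cs -> P (g c) = P c) -> count P (map g cs) = count P cs.
Proof. elim: cs => //= c cs IH H; rewrite H; auto; by rewrite IH //; auto. Qed.

Lemma red_relabel f t : red (relabel f t) = red t.
Proof.
elim/rw_ind_f: t => L cs IH /=; rewrite /nilp size_map; congr (_ && _).
by apply: all_map_In => c hc; rewrite IH.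
Qed.

Lemma flatten_map_In (A B : Type) (F G : A -> seq B) cs :
  (forall c, List.In c cs -> F c = G c) -> flatten (map F cs) = flatten (map G cs).
Proof. elim: cs => //= c cs IH H; rewrite H; auto; by rewrite IH //; auto. Qed.

Lemma tlabels_relabel f t : tlabels (relabel f t) = map f (tlabels t).
Proof.
elim/rw_ind_f: t => L cs IH /=; rewrite map_cat map_flatten -!map_comp; congr (_ ++ _).
by apply: flatten_map_In => c hc /=; rewrite IH.
Qed.

Lemma Loc_relabel f u : Loc (relabel f u) <-> Loc u.
Proof.
case: u => L cs /=; apply: Loc_iff; rewrite ?size_map //.
by apply: count_map_In => c _; rewrite red_relabel.
Qed.

Lemma AS_relabel f t : AS (fun u => Loc u /\ is_interval (map f (tlabels u))) t ->
  AS GL (relabel f t).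
Proof.
elim/rw_ind_f: t => L cs IH /AS_node [[h1 h2] h3] /=; apply/AS_node; split.
- split; last by change (is_interval (tlabels (relabel f (RWNode L cs)))); rewrite tlabels_relabel.
  by apply/(Loc_relabel f (RWNode L cs)).
- move=> c' /List.in_map_iff [c [<- hc]]; exact: (IH c hc (h3 c hc)).
Qed.

Lemma relabel_comp f g t : relabel f (relabel g t) = relabel (f \o g) t.
Proof.
elim/rw_ind_f: t => L cs IH /=; rewrite -map_comp; congr RWNode.
rewrite -map_comp; elim: cs IH => //= c cs IHc H; rewrite H; auto; by rewrite IHc //; auto.
Qed.

Lemma relabel_id_in f t : (forall y, y \in tlabels t -> f y = y) -> relabel f t = t.
Proof.
elim/rw_ind_f: t => L cs IH /= H; congr RWNode.
- rewrite -[RHS]map_id; apply/eq_in_map => y hy; apply: H; by rewrite mem_cat hy.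
- have : forall c, List.In c cs -> relabel f c = c.
    move=> c hc; apply: IH => // y hy; apply: H; rewrite mem_cat; apply/orP; right.
    exact: mem_flatten_In hc hy.
  elim: cs {IH H} => //= c cs IHc H; rewrite H; auto; by rewrite IHc //; auto.
Qed.

Lemma int_map_shift (s : seq nat) a b a' f : s =i iota a b ->
  (forall y, y \in s -> f y + a = y + a') -> map f s =i iota a' b.
Proof.
move=> h H z; apply/idP/idP.
- case/mapP => y hy ->; have := H y hy; move: hy; rewrite h !mem_iota; lia.
- rewrite mem_iota => hz; apply/mapP; exists (z + a - a').
  + by rewrite h mem_iota; lia.
  + have hy : z + a - a' \in s by rewrite h mem_iota; lia.
    have := H _ hy; lia.
Qed.

Lemma labels_pos t : AS GL t -> 0 < size (tlabels t).
Proof.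
elim/rw_ind_f: t => L cs IH /AS_node [[[h1 h2 h3 h4] _] hc] /=.
rewrite size_cat; case: L h1 h2 h3 h4 => [|a L] //= _ h2 _ _.
case: cs IH hc h2 => [|c cs] IH hc h2; first by have := h2 erefl.
have := IH c (or_introl erefl) (hc c (or_introl erefl)).
rewrite /= !size_cat; lia.
Qed.

Definition Fsub x n y := if y == x then iota x n else [:: shift1 x n y].
Definition sub x n s := flatten (map (Fsub x n) s).

Lemma shift1_inj x n : 0 < n -> injective (shift1 x n).
Proof. move=> hn y1 y2; rewrite /shift1; case: ifP; case: ifP; lia. Qed.

Lemma shift1_x x n : shift1 x n x = x.
Proof. by rewrite /shift1 ltnn. Qed.

Lemma mem_shift1 x n s : 0 < n -> (x \in map (shift1 x n) s) = (x \in s).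
Proof. by move=> hn; rewrite -{1}(shift1_x x n) mem_map //; apply: shift1_inj. Qed.

Lemma sub_notin x n s : x \notin s -> sub x n s = map (shift1 x n) s.
Proof.
elim: s => //= y s IH; rewrite inE negb_or => /andP[hy hs].
rewrite /sub /= {1}/Fsub eq_sym (negbTE hy) /=; congr cons; exact: IH.
Qed.

Lemma sub_cat x n s t : sub x n (s ++ t) = sub x n s ++ sub x n t.
Proof. by rewrite /sub map_cat flatten_cat. Qed.

Lemma flatten_flatten (A B C : Type) (G : A -> seq B) (h : B -> seq C) cs :
  flatten (map h (flatten (map G cs))) = flatten (map (fun c => flatten (map h (G c))) cs).
Proof. by elim: cs => //= c cs IH; rewrite map_cat flatten_cat IH. Qed.

Lemma perm_flatten_In (A : Type) (F G : A -> seq nat) cs :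
  (forall c, List.In c cs -> perm_eq (F c) (G c)) ->
  perm_eq (flatten (map F cs)) (flatten (map G cs)).
Proof.
elim: cs => //= c cs IH H; apply: perm_cat; first by apply: H; left.
by apply: IH => d hd; apply: H; right.
Qed.

Lemma perm_sub x n s t : perm_eq s t -> perm_eq (sub x n s) (sub x n t).
Proof. by move=> h; apply/perm_flatten/perm_map. Qed.

Lemma int_map_f x n s : 0 < n -> is_interval s -> x \notin s ->
  is_interval (map (shift1 x n) s).
Proof.
move=> hn [a [b h]] hx; exists (if x < a then a + n - 1 else a), b.
have hx' : ~~ (a <= x < a + b) by rewrite -mem_iota -h.
apply: (int_map_shift h) => y; rewrite h mem_iota /shift1.
move: hx'; case: ifP; case: ifP; lia.
Qed.

Lemma int_sub x n s : 0 < n -> is_interval s -> is_interval (sub x n s).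
Proof.
move=> hn hs; case hx: (x \in s); last by rewrite sub_notin ?hx //; apply: int_map_f; rewrite ?hx.
case: hs => a [b h]; exists a, (b + n - 1) => z; apply/idP/idP.
- move: hx; rewrite h mem_iota => hx.
  case/flatten_mapP => y; rewrite h mem_iota /Fsub => hy.
  case: eqP => [e|ne]; first by rewrite !mem_iota; lia.
  rewrite inE /shift1 => /eqP ->; case: ifP; rewrite !mem_iota; lia.
- move: hx; rewrite h !mem_iota => hx hz; apply/flatten_mapP.
  case: (ltnP z x) => hzx.
    exists z; first by rewrite h mem_iota; lia.
    by rewrite /Fsub; case: eqP; [lia| rewrite /shift1; case: ifP; rewrite ?inE; lia].
  case: (ltnP z (x + n)) => hzn.
    by exists x; [rewrite h mem_iota; lia | rewrite /Fsub eqxx mem_iota; lia].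
  exists (z - n + 1); first by rewrite h mem_iota; lia.
  rewrite /Fsub; case: eqP; first lia.
  by rewrite /shift1; case: ifP; rewrite ?inE; lia.
Qed.

Lemma sub_iota x n m : 0 < n -> 1 <= x <= m -> sub x n (iota 1 m) = iota 1 (m + n - 1).
Proof.
move=> hn hx.
have -> : iota 1 m = iota 1 (x - 1) ++ x :: iota (x + 1) (m - x).
  rewrite {1}(_ : m = (x - 1) + (m - x).+1); last lia.
  rewrite iotaD (_ : 1 + (x - 1) = x); last lia.
  by rewrite /= addn1.
rewrite -cat1s !sub_cat (@sub_notin x n (iota 1 (x - 1))); last by rewrite mem_iota; lia.
rewrite (@sub_notin x n (iota (x + 1) (m - x))); last by rewrite mem_iota; lia.
rewrite /sub /= /Fsub eqxx cats0.
have -> : map (shift1 x n) (iota 1 (x - 1)) = iota 1 (x - 1).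
  rewrite -[RHS]map_id; apply/eq_in_map => y; rewrite mem_iota /shift1; case: ifP; lia.
have -> : map (shift1 x n) (iota (x + 1) (m - x)) = iota (x + n) (m - x).
  rewrite (_ : x + n = (n - 1) + (x + 1)); last lia.
  rewrite [in RHS]iotaDl; apply/eq_in_map => y; rewrite mem_iota /shift1; case: ifP; lia.
rewrite (_ : m + n - 1 = (x - 1) + n + (m - x)); last lia.
rewrite !iotaD -catA (_ : 1 + (x - 1) = x); last lia.
by rewrite (_ : 1 + (x - 1 + n) = x + n); last lia.
Qed.

Lemma flatten_single (G : rwtree -> seq rwtree) cs :
  (forall c, List.In c cs -> G c = [:: c]) -> flatten (map G cs) = cs.
Proof. elim: cs => //= c cs IH H; rewrite H; auto; by rewrite IH //; auto. Qed.

Lemma graft_notin x T2 t : x \notin tlabels t -> graft x T2 t = [:: t].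
Proof.
elim/rw_ind_f: t => L cs IH /=; rewrite mem_cat negb_or => /andP[hL hc].
rewrite (negbTE hL) flatten_single // => c hin; apply: IH => //.
by apply: contra hc => hy; apply: mem_flatten_In hin hy.
Qed.

Lemma relabel_notin_good x n t : 0 < n -> x \notin tlabels t -> AS GL t ->
  AS GL (relabel (shift1 x n) t).
Proof.
move=> hn hx hg; apply: AS_relabel.
have H := AS_and hg (@AS_sub t).
refine (AS_impl _ H) => u [[h1 h2] h3]; split => //; apply: int_map_f => //.
by apply: contra hx; apply: h3.
Qed.

Definition Spec x n t G := [/\ forall g, List.In g G -> AS GL g,
  perm_eq (flatten (map tlabels G)) (sub x n (tlabels t)), count red G = red t & 0 < size G].

Lemma spec_notin x n T2 t : 0 < n -> AS GL t -> x \notin tlabels t ->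
  Spec x n t (graft x T2 (relabel (shift1 x n) t)).
Proof.
move=> hn hg hx; rewrite graft_notin; last by rewrite tlabels_relabel mem_shift1.
split => //.
- by move=> g [<-|[]]; apply: relabel_notin_good.
- by rewrite /= cats0 tlabels_relabel sub_notin.
- by rewrite /= red_relabel addn0.
Qed.

Lemma uniq_flatten_In (A : Type) (F : A -> seq nat) cs c :
  uniq (flatten (map F cs)) -> List.In c cs -> uniq (F c).
Proof.
elim: cs => //= d cs IH; rewrite cat_uniq => /and3P[h1 _ h3] [<-|h] //.
exact: IH.
Qed.

Lemma tlabels_relabel_list f cs :
  flatten (map tlabels (map (relabel f) cs)) = map f (flatten (map tlabels cs)).
Proof. by rewrite map_flatten -!map_comp; congr flatten; apply: eq_map => c /=; rewrite tlabels_relabel. Qed.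

Lemma count_red_relabel f cs : count red (map (relabel f) cs) = count red cs.
Proof. by rewrite count_map; apply: eq_count => c /=; rewrite red_relabel. Qed.

Lemma sub_x_cons x n s : x \notin s -> sub x n (x :: s) = iota x n ++ map (shift1 x n) s.
Proof. by move=> hx; rewrite /sub /= {1}/Fsub eqxx; congr (_ ++ _); apply: sub_notin. Qed.

Lemma count_flatten_G (G : rwtree -> seq rwtree) cs :
  (forall c, List.In c cs -> count red (G c) = red c) ->
  count red (flatten (map G cs)) = count red cs.
Proof. elim: cs => //= c cs IH H; rewrite count_cat H; auto; by rewrite IH //; auto. Qed.

Lemma size_flatten_G (G : rwtree -> seq rwtree) cs :
  (forall c, List.In c cs -> 0 < size (G c)) ->
  size cs <= size (flatten (map G cs)).
Proof.
elim: cs => //= c cs IH H; rewrite size_cat.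
have := H c (or_introl erefl); have := IH (fun d hd => H d (or_intror hd)); lia.
Qed.

Lemma graft_spec x n T2 t : 0 < n -> AS GL T2 -> perm_eq (tlabels T2) (iota x n) ->
  AS GL t -> uniq (tlabels t) -> Spec x n t (graft x T2 (relabel (shift1 x n) t)).
Proof.
move=> hn; case: T2 => L2 cs2 hT2 hT2l.
move: (hT2) => /AS_node [[[k1 k2 k3 k4] kint] kc]; rewrite /= in k1 k2 k3 k4.
elim/rw_ind_f: t => L cs IH hg hu.
case hx: (x \in tlabels (RWNode L cs)); last by apply: spec_notin; rewrite ?hx.
move: (hg) => /AS_node [[[h1 h2 h3 h4] hint] hgc]; rewrite /= in h1 h2 h3 h4.
have huc : forall c, List.In c cs -> uniq (tlabels c).
  by move: hu => /=; rewrite cat_uniq => /and3P[_ _ hu] c hc; apply: uniq_flatten_In hu hc.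
set f := shift1 x n.
case hxL: (x \in L).
-
  have eL : L = [:: x].
    have aux : forall L0 : seq nat, size L0 <= 1 -> x \in L0 -> L0 = [:: x].
      by case => [|a [|b l]] //= _; rewrite inE => /eqP ->.
    exact: aux.
  subst L.
  have hxc : x \notin flatten (map tlabels cs).
    by move: hu => /= /andP [].
  have hxc' : forall c, List.In c cs -> x \notin tlabels c.
    by move=> c hc; apply: contra hxc => h; apply: mem_flatten_In hc h.
  have hcs1 : forall d, List.In d (map (relabel f) cs) -> AS GL d.
    move=> d /List.in_map_iff [c [<- hc]]; apply: relabel_notin_good => //.
      exact: hxc'. exact: hgc.
  have hlab : sub x n (tlabels (RWNode [:: x] cs)) =
              iota x n ++ flatten (map tlabels (map (relabel f) cs)).
    by rewrite /= sub_x_cons // tlabels_relabel_list.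
  have hwc : count red (map (relabel f) cs) = 0.
    by rewrite count_red_relabel; apply: count_red0; apply: h3.
  have hsub : is_interval (sub x n (tlabels (RWNode [:: x] cs))) by apply: int_sub.
  rewrite /= /f shift1_x -/f mem_seq1 eqxx /=.
  rewrite eqxx andbT.
  change (nilp L2 && all (fun c => ~~ red c) cs2) with (red (RWNode L2 cs2)).
  case hr: (red (RWNode L2 cs2)).
  + move: (hr) => /= /andP [hL2 hw2].
    case hcs: (nilp (map (relabel f) cs)).
    * rewrite /=; move: hcs; rewrite /nilp size_map => /nilP ecs; subst cs.
      split.
      -- by move=> g hgin; apply: kc.
      -- rewrite hlab /= cats0; move: hT2l; rewrite /=.
         by move: hL2; rewrite /nilp size_eq0 => /eqP ->.
      -- exact: count_red0.
      -- by move: (k2 hL2); rewrite /=; case: (size cs2).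
    * rewrite /node_op hr /= ?eqxx.
      split => //.
      -- move=> g [<-|[]]; apply/AS_node; split.
         ++ split; first split => //.
            ** by rewrite /= size_rcons; move: hcs; rewrite /nilp size_map; case: (size cs).
            ** rewrite /= -cats1 count_cat hwc; move: hr; rewrite /= => ->; done.
            ** apply: int_perm hsub; rewrite perm_sym hlab /= -cats1 map_cat flatten_cat /= cats0.
               by rewrite perm_catC perm_cat2r.
         ++ move=> d; rewrite -cats1 List.in_app_iff => -[/hcs1 //|[<-|[]]] //.
      -- rewrite hlab /= -cats1 map_cat flatten_cat /= !cats0.
         by rewrite perm_catC perm_cat2r.
      -- by move: hr; rewrite /= -cats1 all_cat /= => ->; rewrite !andbF.
  + rewrite /node_op hr /= ?eqxx /=.
    have hrg : red (RWNode L2 (map (relabel f) cs ++ cs2)) = false.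
      by move: hr => /=; rewrite all_cat; case: (nilp L2); case: (all _ cs2); rewrite ?andbF.
    have hlab2 : perm_eq (tlabels (RWNode L2 (map (relabel f) cs ++ cs2)))
                         (sub x n (tlabels (RWNode [:: x] cs))).
      rewrite hlab /= map_cat flatten_cat perm_catCA.
      by rewrite perm_catC perm_cat2r.
    split => //.
    * move=> g [<-|[]]; apply/AS_node; split.
      -- split; first split => //.
         ++ by move=> /k2; rewrite /= size_cat; lia.
         ++ move=> /k3; rewrite /= all_cat => ->; rewrite andbT.
            by rewrite all_white_count hwc.
         ++ by rewrite /= count_cat hwc.
         ++ by apply: int_perm hsub; rewrite perm_sym.
      -- move=> d; rewrite List.in_app_iff => -[/hcs1 //|/kc //].
    * by rewrite /= cats0.
    * by move: hrg; rewrite /= => ->.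
-
  have hxL' : x \notin map f L by rewrite mem_shift1 ?hxL.
  rewrite /= (negbTE hxL') -map_comp.
  set G := (graft x (RWNode L2 cs2) \o relabel f).
  have Hs : forall c, List.In c cs -> Spec x n c (G c).
    by move=> c hc; apply: IH => //; [apply: hgc | apply: huc].
  have hcount : count red (flatten (map G cs)) = count red cs.
    by apply: count_flatten_G => c /Hs [].
  have hsize : size cs <= size (flatten (map G cs)).
    by apply: size_flatten_G => c /Hs [].
  have hperm : perm_eq (tlabels (RWNode (map f L) (flatten (map G cs))))
                       (sub x n (tlabels (RWNode L cs))).
    rewrite /= sub_cat sub_notin ?hxL // perm_cat2l flatten_flatten.
    rewrite /sub flatten_flatten; apply: perm_flatten_In => c /Hs [_ hp _ _]; exact: hp.
  split => //.
  + move=> g [<-|[]]; apply/AS_node; split.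
    * split; first split.
      -- by rewrite /= size_map.
      -- by rewrite /= /nilp size_map => /h2; lia.
      -- rewrite /= /nilp size_map => /h3; rewrite !all_white_count hcount //.
      -- by rewrite /= hcount.
      -- by apply: (int_perm _ (int_sub x hn hint)); rewrite perm_sym.
    * move=> d /in_flatten_map [c [hc hd]]; have [k _ _ _] := Hs c hc; exact: k.
  + by rewrite /= cats0.
  + by rewrite /= addn0 /nilp size_map !all_white_count hcount.
Qed.

Lemma rw_comp_graft n x T1 T2 :
  (relabel (shift1 x n) T1 = RWNode [:: x] [::] /\
   rw_comp n x T1 T2 = relabel (shift2 x) T2) \/
  graft x (relabel (shift2 x) T2) (relabel (shift1 x n) T1) = [:: rw_comp n x T1 T2].
Proof.
case: T1 => L cs; rewrite /rw_comp /=.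
case: ifP => hxL; last by right.
case: ifP => hc; last by right.
left; move: hc => /andP [/andP [_ hn] /eqP ->]; split => //.
by move: hn; case: cs.
Qed.

Lemma shift2_iota x n : 1 <= x -> map (shift2 x) (iota 1 n) = iota x n.
Proof.
move=> hx; rewrite {2}(_ : x = (x - 1) + 1); last lia.
by rewrite iotaDl; apply: eq_map => y; rewrite /shift2; lia.
Qed.

Lemma comp_good m n x T1 T2 : good m T1 -> good n T2 -> 1 <= x <= m ->
  good (m + n - 1) (rw_comp n x T1 T2).
Proof.
move=> [p1 g1] [p2 g2] hx.
have hn : 0 < n by have := labels_pos g2; rewrite (perm_size p2) size_iota.
have g2' : AS GL (relabel (shift2 x) T2).
  apply: AS_relabel; refine (AS_impl _ g2) => u [h1 [a [b h2]]]; split => //.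
  exists (a + x - 1), b; apply: (int_map_shift h2) => y _; rewrite /shift2; lia.
have p2' : perm_eq (tlabels (relabel (shift2 x) T2)) (iota x n).
  by rewrite tlabels_relabel -shift2_iota; [apply: perm_map | lia].
have hu1 : uniq (tlabels T1) by rewrite (perm_uniq p1) iota_uniq.
have S := graft_spec hn g2' p2' g1 hu1.
case: (rw_comp_graft n x T1 T2) => [[e ->] | e].
- have hs := congr1 (fun t => size (tlabels t)) e.
  rewrite /= tlabels_relabel size_map (perm_size p1) size_iota in hs.
  subst m; have -> : x = 1 by lia.
  rewrite relabel_id_in; first by rewrite (_ : 1 + n - 1 = n) //; lia.
  by move=> y _; rewrite /shift2; lia.
- rewrite e in S; case: S => [hg hp _ _]; split; last by apply: hg; left.
  have h1 : perm_eq (tlabels (rw_comp n x T1 T2)) (sub x n (tlabels T1)).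
    by move: hp; rewrite /= cats0.
  apply: (perm_trans h1); rewrite -(sub_iota hn hx); exact: perm_sub.
Qed.

Lemma perm_int s a b : perm_eq s (iota a b) -> is_interval s.
Proof. by move=> /perm_mem h; exists a, b. Qed.

Lemma forward n T : RWS_odot n T -> good n T.
Proof.
elim => {n T}.
- split => //; move=> u /= [<-|[]]; split; [by split | by apply: (@perm_int _ 1 1)].
- split => //; move=> u /= [<-|[<-|[]]]; (split; [by split | ]).
  + by apply: (@perm_int _ 1 2).
  + by apply: (@perm_int _ 1 1).
- split => //; move=> u /= [<-|[<-|[]]]; (split; [by split | ]).
  + by apply: (@perm_int _ 1 2).
  + by apply: (@perm_int _ 2 1).
- split => //; move=> u /= [<-|[<-|[<-|[]]]]; (split; [by split | ]).
  + by apply: (@perm_int _ 1 2).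
  + by apply: (@perm_int _ 1 1).
  + by apply: (@perm_int _ 2 1).
- move=> m n x T1 T2 _ h1 _ h2 hx; exact: comp_good.
- move=> n T T' _ h e; exact: good_tequiv e h.
Qed.

Lemma perm_tequiv L s t : Permutation.Permutation s t ->
  forall pre, tequiv (RWNode L (pre ++ s)) (RWNode L (pre ++ t)).
Proof.
elim => {s t}.
- by move=> pre; apply: tq_refl.
- move=> x l l' _ IH pre; have := IH (rcons pre x); by rewrite -!cats1 -!catA.
- by move=> x y l pre; apply: tq_swap.
- move=> l l' l'' _ IH1 _ IH2 pre; exact: tq_trans (IH1 pre) (IH2 pre).
Qed.

Lemma perm_tequiv0 L s t : Permutation.Permutation s t -> tequiv (RWNode L s) (RWNode L t).
Proof. by move=> h; apply: (@perm_tequiv L s t h [::]). Qed.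

Lemma map_List (A B : Type) (f : A -> B) s : map f s = List.map f s.
Proof. by elim: s => //= a s ->. Qed.

Lemma Perm_map (A B : Type) (f : A -> B) s t :
  Permutation.Permutation s t -> Permutation.Permutation (map f s) (map f t).
Proof. by rewrite !map_List; apply: Permutation.Permutation_map. Qed.

Lemma perm_eq_Perm (s t : seq nat) : perm_eq s t -> Permutation.Permutation s t.
Proof.
elim: s t => [|x s IH] t.
- by case: t => [|y t] // /perm_size.
- move=> hp; have hx : x \in t by rewrite -(perm_mem hp) mem_head.
  move: hp; case/splitPr: t / hx => t1 t2 hp; apply: Permutation.Permutation_cons_app; apply: IH.
  rewrite -(perm_cons x); apply: (perm_trans hp).
  by rewrite perm_sym -cat1s perm_catCA.
Qed.

Definition leaf a := RWNode [:: a] [::].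

Lemma relabel_leaves f L s :
  relabel f (RWNode L (map leaf s)) = RWNode (map f L) (map leaf (map f s)).
Proof. by rewrite /= -!map_comp. Qed.

Lemma rw_comp_in n x L cs T2 : x \in map (shift1 x n) L ->
  ~~ red (relabel (shift2 x) T2) ->
  rw_comp n x (RWNode L cs) T2 =
  node_op x (relabel (shift2 x) T2) (map (shift1 x n) L) (map (relabel (shift1 x n)) cs).
Proof. by move=> hx hr; rewrite /rw_comp /= hx (negbTE hr). Qed.

Lemma rw_comp_notin n x L cs T2 : x \notin map (shift1 x n) L ->
  rw_comp n x (RWNode L cs) T2 =
  RWNode (map (shift1 x n) L)
    (flatten (map (graft x (relabel (shift2 x) T2)) (map (relabel (shift1 x n)) cs))).
Proof. by move=> hx; rewrite /rw_comp /= (negbTE hx). Qed.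

Definition star k := RWNode [::] (map leaf (iota 1 k)).

Lemma graft_leaves x T2 s : x \notin s -> flatten (map (graft x T2) (map leaf s)) = map leaf s.
Proof.
elim: s => // y s IH; rewrite inE negb_or => /andP [h1 h2].
change (graft x T2 (leaf y) ++ flatten (map (graft x T2) (map leaf s)) = leaf y :: map leaf s).
by rewrite graft_notin ?IH //= inE.
Qed.

Lemma relabel_leaf_map f s : map (relabel f) (map leaf s) = map leaf (map f s).
Proof. by rewrite -!map_comp. Qed.

Lemma star_rws j : RWS_odot j.+2 (star j.+2).
Proof.
elim: j => [|j IH]; first exact: rws_odot.
have := rws_comp (x := 1) IH rws_odot; rewrite (_ : j.+2 + 2 - 1 = j.+3); last lia.
move=> /(_ erefl); congr RWS_odot.
rewrite /star rw_comp_notin //= -/(shift1 1 2) relabel_leaf_map graft_leaves.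
- have -> : map (shift1 1 2) (iota 3 j) = iota 4 j.
    rewrite (iotaDl 1 3); apply/eq_in_map => y; rewrite mem_iota /shift1; case: ifP; lia.
  by rewrite /shift2 /=.
- apply/mapP => -[y]; rewrite mem_iota /shift1; case: ifP; lia.
Qed.

Definition fan i j := RWNode [:: i.+1] (map leaf (iota 1 i ++ iota i.+2 j)).

Lemma map_shift1_fan i j :
  map (shift1 i.+1 2) (iota 1 i ++ iota i.+2 j) = iota 1 i ++ iota i.+3 j.
Proof.
rewrite map_cat; congr (_ ++ _).
- rewrite -[RHS]map_id; apply/eq_in_map => y; rewrite mem_iota /shift1; case: ifP; lia.
- rewrite (_ : i.+3 = 1 + i.+2) // iotaDl; apply/eq_in_map => y.
  rewrite mem_iota /shift1; case: ifP; lia.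
Qed.

Lemma fan_comp_eq i j T2 : ~~ red (relabel (shift2 i.+1) T2) ->
  rw_comp 2 i.+1 (fan i j) T2 =
  RWNode (rlabels (relabel (shift2 i.+1) T2))
    (map leaf (iota 1 i ++ iota i.+3 j) ++ rchildren (relabel (shift2 i.+1) T2)).
Proof.
move=> hr; rewrite /fan rw_comp_in //=; last by rewrite shift1_x mem_seq1.
by rewrite /node_op hr /= shift1_x eqxx /= relabel_leaf_map map_shift1_fan.
Qed.

Lemma fan_rws i j : RWS_odot (i + j + 1) (fan i j).
Proof.
elim: i j => [|i IHi] j.
- elim: j => [|j IHj]; first exact: rws_unit.
  have := rws_comp (x := 1) IHj rws_prec; rewrite (_ : 0 + j + 1 + 2 - 1 = 0 + j.+1 + 1); last lia.
  move=> /(_ ltac:(lia)) h; apply: rws_equiv h _.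
  rewrite fan_comp_eq // /fan /shift2 /=.
  apply: perm_tequiv0; apply: Permutation.Permutation_sym.
  exact: Permutation.Permutation_cons_append.
- have := rws_comp (x := i.+1) (IHi j) rws_succ.
  rewrite (_ : i + j + 1 + 2 - 1 = i.+1 + j + 1); last lia.
  move=> /(_ ltac:(lia)) h; apply: rws_equiv h _.
  rewrite fan_comp_eq // /fan /shift2.
  rewrite (_ : iota 1 i.+1 = iota 1 i ++ [:: i.+1]); last by rewrite -[in LHS](addn1 i) iotaD add1n.
  rewrite /=.
  rewrite (_ : 2 + i.+1 - 1 = i.+2); last lia.
  rewrite (_ : 1 + i.+1 - 1 = i.+1); last lia.
  rewrite !map_cat -!catA; apply: perm_tequiv0; apply: Permutation.Permutation_app_head.
  exact: Permutation.Permutation_app_comm.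
Qed.

Definition gsh p m y := if p < y then y - (m - 1) else y.

Lemma lab_lemma (R C : seq nat) n p m : uniq (R ++ C) -> (R ++ C) =i iota 1 n ->
  C =i iota p m -> 0 < m ->
  [/\ 1 <= p, p + m <= n + 1, (forall y, y \in R -> y < p \/ p + m <= y)
    & perm_eq (map (gsh p m) (p :: R)) (iota 1 (n - m + 1))].
Proof.
move=> hu hm hC hm0.
have hRC : forall y, y \in R -> y \notin C.
  move=> y hy; move: hu; rewrite cat_uniq => /and3P [_ /hasPn h _].
  by apply/negP => hc; move: (h y hc); rewrite hy.
have hmem : forall y, (y \in R) = (1 <= y < 1 + n) && ~~ (p <= y < p + m).
  move=> y; rewrite -!mem_iota -hm -hC mem_cat.
  case hy: (y \in R) => /=; first by rewrite (hRC y hy).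
  by rewrite andbN.
have hp : p \in C by rewrite hC mem_iota; lia.
have hpn : p \in iota 1 n by rewrite -hm mem_cat hp orbT.
have hpm : p + m - 1 \in iota 1 n by rewrite -hm mem_cat hC mem_iota; apply/orP; right; lia.
rewrite !mem_iota in hpn hpm.
have hR : forall y, y \in R -> y < p \/ p + m <= y.
  by move=> y; rewrite hmem; lia.
split => //; try lia.
apply: uniq_perm.
- rewrite map_inj_in_uniq.
  + rewrite /= hmem; move: hu; rewrite cat_uniq => /andP [-> _]; rewrite andbT; lia.
  + move=> y1 y2; rewrite !inE !hmem /gsh.
    case/orP => [/eqP ->|h1]; case/orP => [/eqP ->|h2] //; case: ifP; case: ifP; lia.
- by rewrite iota_uniq.
- move=> z; rewrite mem_iota; apply/idP/idP.
  + case/mapP => y; rewrite inE => /orP [/eqP ->|]; rewrite /gsh.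
      by rewrite ltnn => ->; lia.
    by rewrite hmem => hy ->; case: ifP; lia.
  + move=> hz; apply/mapP.
    case: (ltngtP z p) => hzp.
    * exists z; last by rewrite /gsh; case: ifP; lia.
      by rewrite inE hmem; apply/orP; right; lia.
    * exists (z + m - 1); last by rewrite /gsh; case: ifP; lia.
      by rewrite inE hmem; apply/orP; right; lia.
    * by exists p; rewrite ?inE ?eqxx // /gsh ltnn.
Qed.

Lemma rel_g_good d (R : seq nat) p m : 0 < m -> AS GL d -> {subset tlabels d <= R} ->
  (forall y, y \in R -> y < p \/ p + m <= y) -> AS GL (relabel (gsh p m) d).
Proof.
move=> hm hg hs hR; apply: AS_relabel.
have H := AS_and hg (@AS_sub d).
refine (AS_impl _ H) => u [[h1 [a [b h2]]] h3]; split => //.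
have hpu : ~~ (a <= p < a + b).
  rewrite -mem_iota -h2; apply/negP => /h3 /hs /hR; lia.
exists (if a < p then a else a - (m - 1)), b; apply: (int_map_shift h2) => y hy.
have hyR := hR y (hs y (h3 y hy)).
have ha : a \in tlabels u by rewrite h2 mem_iota; move: hy; rewrite h2 mem_iota; lia.
have haR := hR a (hs a (h3 a ha)).
move: hy; rewrite h2 mem_iota /gsh => hy; case: ifP; case: ifP; lia.
Qed.

Lemma down_good c p m : AS GL c -> uniq (tlabels c) -> tlabels c =i iota p m -> 1 <= p ->
  good m (relabel (fun y => y - (p - 1)) c).
Proof.
move=> hg hu hC hp; split.
- rewrite tlabels_relabel.
  have -> : iota 1 m = map (fun y => y - (p - 1)) (iota p m).
    rewrite {2}(_ : p = (p - 1) + 1); last lia.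
    rewrite iotaDl -map_comp -[LHS]map_id; apply: eq_map => y /=; lia.
  by apply: perm_map; apply: uniq_perm; rewrite ?iota_uniq.
- apply: AS_relabel.
  have H := AS_and hg (@AS_sub c).
  refine (AS_impl _ H) => u [[h1 [a [b h2]]] h3]; split => //.
  exists (a - (p - 1)), b; apply: (int_map_shift h2) => y hy.
  have ha : a \in tlabels u by rewrite h2 mem_iota; move: hy; rewrite h2 mem_iota; lia.
  have hy' := h3 y hy; have ha' := h3 a ha.
  rewrite hC mem_iota in hy'; rewrite hC mem_iota in ha'.
  move: hy; rewrite h2 mem_iota; lia.
Qed.

Lemma leaf_GL p : AS GL (leaf p).
Proof.
move=> u /= [<-|[]]; split; first by split.
by exists p, 1 => y.
Qed.

Lemma split_has (P : pred rwtree) cs : has P cs ->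
  exists cs1 c cs2, cs = cs1 ++ c :: cs2 /\ P c.
Proof.
elim: cs => //= d cs IH /orP [h|/IH [cs1 [c [cs2 [-> h]]]]].
- by exists [::], d, cs.
- by exists (d :: cs1), c, cs2.
Qed.

Lemma In_cat3 (A : Type) (d c : A) cs1 cs2 :
  List.In d (cs1 ++ c :: cs2) <-> d = c \/ List.In d (cs1 ++ cs2).
Proof. rewrite !List.in_app_iff /=; split; intuition. Qed.

Lemma sub_flatten_In cs d : List.In d cs ->
  {subset tlabels d <= flatten (map tlabels cs)}.
Proof. by move=> hd y hy; apply: mem_flatten_In hd hy. Qed.

Lemma AS_root P t : AS P t -> P t.
Proof. by case: t => L cs /AS_node []. Qed.

Definition Rof L cs1 cs2 := L ++ flatten (map tlabels cs1) ++ flatten (map tlabels cs2).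

Lemma prep n L cs1 c cs2 : good n (RWNode L (cs1 ++ c :: cs2)) ->
  exists p m, [/\ tlabels c =i iota p m, 0 < m, m = size (tlabels c), uniq (tlabels c) &
    [/\ 1 <= p, p + m <= n + 1, (forall y, y \in Rof L cs1 cs2 -> y < p \/ p + m <= y),
        perm_eq (map (gsh p m) (p :: Rof L cs1 cs2)) (iota 1 (n - m + 1))
      & size (Rof L cs1 cs2) + m = n]].
Proof.
move=> [hp hg].
have hperm : perm_eq (tlabels (RWNode L (cs1 ++ c :: cs2))) (Rof L cs1 cs2 ++ tlabels c).
  apply/permP => q; rewrite /Rof /= map_cat flatten_cat /= !count_cat; lia.
have hu : uniq (Rof L cs1 cs2 ++ tlabels c).
  by rewrite -(perm_uniq hperm) (perm_uniq hp) iota_uniq.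
have hm : (Rof L cs1 cs2 ++ tlabels c) =i iota 1 n.
  by move=> y; rewrite -(perm_mem hperm) (perm_mem hp).
have hc : AS GL c.
  by move: hg => /AS_node [_ H]; apply: H; rewrite List.in_app_iff /=; auto.
have huc : uniq (tlabels c) by move: hu; rewrite cat_uniq => /and3P [].
case: (AS_root hc) => _ [p [b hb]].
have hpb : perm_eq (tlabels c) (iota p b) by apply: uniq_perm; rewrite ?iota_uniq.
have hsz : size (tlabels c) = b by rewrite (perm_size hpb) size_iota.
have hm0 : 0 < b by rewrite -hsz; apply: labels_pos.
have [h1 h2 h3 h4] := lab_lemma hu hm hb hm0.
exists p, b; split => //; split => //.
have := perm_size hperm; rewrite (perm_size hp) size_iota size_cat hsz => ->; done.
Qed.



Lemma Rof_sub L cs1 cs2 d : List.In d (cs1 ++ cs2) -> {subset tlabels d <= Rof L cs1 cs2}.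
Proof.
rewrite List.in_app_iff => -[h|h] y hy; rewrite /Rof !mem_cat.
- by rewrite (mem_flatten_In h hy) orbT.
- by rewrite (mem_flatten_In h hy) !orbT.
Qed.

Lemma Rof_pos n L cs1 c cs2 : good n (RWNode L (cs1 ++ c :: cs2)) -> 0 < size (Rof L cs1 cs2).
Proof.
move=> [_ /AS_node [[[_ h2 _ _] _] hgc]].
case: L h2 => [|a L] /= h2; last by rewrite /Rof size_cat.
have h := h2 erefl.
case E: (cs1 ++ cs2) => [|d ds].
  by move: E h; rewrite size_cat /=; case: (cs1) => // /= ->.
have hd : List.In d (cs1 ++ cs2) by rewrite E; left.
have := labels_pos (hgc d (proj2 (In_cat3 _ _ _ _) (or_intror hd))).
case Ed: (tlabels d) => [|y ys] // _.
have : y \in Rof [::] cs1 cs2 by apply: (@Rof_sub [::] cs1 cs2 d hd y); rewrite Ed mem_head.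
by case: (Rof _ _ _).
Qed.

Lemma graft_leaf_p p c : ~~ red c -> graft p c (leaf p) = [:: c].
Proof. by move=> hr; rewrite /= mem_seq1 eqxx (negbTE hr) /= /node_op hr /= eqxx; case: c {hr}. Qed.

Lemma shift1_gsh p m y : 0 < m -> (y = p \/ y < p \/ p + m <= y) ->
  shift1 p m (gsh p m y) = y.
Proof. move=> hm; rewrite /gsh /shift1; case: ifP; case: ifP; lia. Qed.

Lemma caseA n L cs1 c cs2 : good n (RWNode L (cs1 ++ c :: cs2)) -> ~~ red c ->
  1 < size (tlabels c) ->
  exists m p T1 c', [/\ good (n - m + 1) T1, good m c', 1 <= p <= n - m + 1, 1 < m < n &
    rw_comp m p T1 c' = RWNode L (cs1 ++ c :: cs2)].
Proof.
move=> hgood hw hsz.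
have hpos := Rof_pos hgood.
have [p [m [hC hm0 hms huc [h1 h2 hR hperm hsize]]]] := prep hgood.
move: (hgood) => [hp hg]; move: (hg) => /AS_node [[hloc hint] hgc].
have hgc' : forall d, List.In d (cs1 ++ cs2) -> AS GL d.
  by move=> d hd; apply: hgc; apply/In_cat3; right.
have hc : AS GL c by apply: hgc; apply/In_cat3; left.
set T10 := RWNode L (cs1 ++ leaf p :: cs2).
have hT10 : perm_eq (tlabels T10) (p :: Rof L cs1 cs2).
  apply/permP => q; rewrite /Rof /= map_cat flatten_cat /= !count_cat /=; lia.
have hpR : p \notin Rof L cs1 cs2 by apply/negP => /hR; lia.
exists m, p, (relabel (gsh p m) T10), (relabel (fun y => y - (p - 1)) c); split.
- split.
  + rewrite tlabels_relabel; apply: perm_trans hperm; exact: perm_map.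
  + apply/AS_node; split.
    * split.
      -- apply/(Loc_relabel (gsh p m) T10).
         have e2 : size (cs1 ++ c :: cs2) = size (cs1 ++ leaf p :: cs2) by rewrite !size_cat.
         have e3 : count red (cs1 ++ c :: cs2) = count red (cs1 ++ leaf p :: cs2).
           by rewrite !count_cat /= (negbTE hw).
         exact: (proj1 (Loc_iff (erefl (size L)) e2 e3) hloc).
      -- apply: (@perm_int _ 1 (n - m + 1)).
         rewrite -[RWNode _ _]/(relabel (gsh p m) T10) tlabels_relabel.
         apply: perm_trans hperm; exact: perm_map.
    * move=> d /List.in_map_iff [e [<- /In_cat3 [->|he]]].
      -- by rewrite /= /gsh ltnn; apply: leaf_GL.
      -- exact: (rel_g_good hm0 (hgc' e he) (@Rof_sub L cs1 cs2 e he) hR).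
- by apply: down_good.
- lia.
- lia.
- have e1 : relabel (shift1 p m) (relabel (gsh p m) T10) = T10.
    rewrite relabel_comp relabel_id_in // => y hy /=; apply: shift1_gsh => //.
    move: hy; rewrite (perm_mem hT10) inE => /orP [/eqP ->|/hR]; auto.
  have e2 : relabel (shift2 p) (relabel (fun y => y - (p - 1)) c) = c.
    rewrite relabel_comp relabel_id_in // => y hy /=; rewrite /shift2.
    by move: hy; rewrite hC mem_iota; lia.
  rewrite /rw_comp e1 e2 /T10 /=.
  have hpL : p \notin L by apply: contra hpR; rewrite /Rof mem_cat => ->.
  rewrite (negbTE hpL) map_cat flatten_cat.
  change (flatten (map (graft p c) (leaf p :: cs2))) with
    (graft p c (leaf p) ++ flatten (map (graft p c) cs2)).
  rewrite graft_leaf_p //.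
  rewrite !flatten_single // => d hd; apply: graft_notin; apply: contra hpR => h.
  + by apply: (@Rof_sub L cs1 cs2 d) => //; rewrite List.in_app_iff; auto.
  + by apply: (@Rof_sub L cs1 cs2 d) => //; rewrite List.in_app_iff; auto.
Qed.

Lemma red_size c : AS GL c -> red c -> 1 < size (tlabels c).
Proof.
case: c => L cs /AS_node [[[_ h2 _ _] _] hc] /= /andP [hL _].
have := h2 hL; rewrite size_cat.
case: cs hc {h2} => [|d [|d' cs]] //= hc _.
have := labels_pos (hc d (or_introl erefl)).
have := labels_pos (hc d' (or_intror (or_introl erefl))).
rewrite !size_cat; lia.
Qed.

Lemma caseB n L cs1 c cs2 : good n (RWNode L (cs1 ++ c :: cs2)) -> red c ->
  exists m p T1 c', [/\ good (n - m + 1) T1, good m c', 1 <= p <= n - m + 1, 1 < m < n &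
    tequiv (rw_comp m p T1 c') (RWNode L (cs1 ++ c :: cs2))].
Proof.
move=> hgood hr.
have hpos := Rof_pos hgood.
have [p [m [hC hm0 hms huc [h1 h2 hR hperm hsize]]]] := prep hgood.
move: (hgood) => [hp hg]; move: (hg) => /AS_node [[[k1 k2 k3 k4] hint] hgc].
have hgc' : forall d, List.In d (cs1 ++ cs2) -> AS GL d.
  by move=> d hd; apply: hgc; apply/In_cat3; right.
have hc : AS GL c by apply: hgc; apply/In_cat3; left.
have hm1 : 1 < m by rewrite hms; apply: red_size.
have hL : L = [::].
  case: L k3 {hgood hp hg hgc hgc' hpos hR hperm hsize hint k1 k2 k4} => // a L /(_ isT).
  rewrite all_white_count count_cat /= hr => /eqP H; exfalso; lia.
subst L; rewrite /= in k2 k4.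
have hcount : count red (cs1 ++ cs2) = 0.
  by move: k4; rewrite !count_cat /= hr; lia.
set T10 := RWNode [:: p] (cs1 ++ cs2).
have hT10 : perm_eq (tlabels T10) (p :: Rof [::] cs1 cs2) by rewrite /= map_cat flatten_cat.
have hpR : p \notin Rof [::] cs1 cs2 by apply/negP => /hR; lia.
exists m, p, (relabel (gsh p m) T10), (relabel (fun y => y - (p - 1)) c); split.
- split.
  + rewrite tlabels_relabel; apply: perm_trans hperm; exact: perm_map.
  + apply/AS_node; split.
    * split.
      -- apply/(Loc_relabel (gsh p m) T10); split => //=.
         by rewrite all_white_count hcount.
         by rewrite hcount.
      -- apply: (@perm_int _ 1 (n - m + 1)).
         rewrite -[RWNode _ _]/(relabel (gsh p m) T10) tlabels_relabel.
         apply: perm_trans hperm; exact: perm_map.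
    * move=> d /List.in_map_iff [e [<- he]].
      exact: (rel_g_good hm0 (hgc' e he) (@Rof_sub [::] cs1 cs2 e he) hR).
- by apply: down_good.
- lia.
- lia.
- have e1 : relabel (shift1 p m) (relabel (gsh p m) T10) = T10.
    rewrite relabel_comp relabel_id_in // => y hy /=; apply: shift1_gsh => //.
    move: hy; rewrite (perm_mem hT10) inE => /orP [/eqP ->|/hR]; auto.
  have e2 : relabel (shift2 p) (relabel (fun y => y - (p - 1)) c) = c.
    rewrite relabel_comp relabel_id_in // => y hy /=; rewrite /shift2.
    by move: hy; rewrite hC mem_iota; lia.
  have hne : nilp (cs1 ++ cs2) = false.
    by move: (k2 isT); rewrite /nilp !size_cat /=; lia.
  rewrite /rw_comp e1 e2 /T10 /= mem_seq1 eqxx hr hne /= /node_op hr /= eqxx.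
  apply: perm_tequiv0; rewrite -cats1 -catA; apply: Permutation.Permutation_app_head.
  apply: Permutation.Permutation_sym; exact: Permutation.Permutation_cons_append.
Qed.

Lemma leaf_of c : AS GL c -> size (tlabels c) <= 1 -> c = leaf (head 0 (tlabels c)).
Proof.
case: c => L cs /AS_node [[[h1 h2 _ _] _] hc] hs; rewrite /= in h1 h2.
case: cs hc h2 hs => [|d cs] hc h2 hs.
- case: L h1 h2 hs => [|b [|b' L]] //= _ h2 _; by have := h2 isT.
- exfalso; have hd := labels_pos (hc d (or_introl erefl)).
  move: hs; rewrite /= !size_cat.
  case: L h1 h2 => [|b L] /= h1 h2; last lia.
  have := h2 isT; case: cs hc {h2} => [|d' cs] //= hc _.
  have := labels_pos (hc d' (or_intror (or_introl erefl))); rewrite !size_cat; lia.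
Qed.

Lemma all_In (P : pred rwtree) cs c : all P cs -> List.In c cs -> P c.
Proof. by elim: cs => //= d cs IH /andP [h1 h2] [<-|h]; [|apply: IH]. Qed.

Lemma map_leaf_eq (h : rwtree -> nat) cs :
  (forall c, List.In c cs -> c = leaf (h c)) -> cs = map leaf (map h cs).
Proof. elim: cs => //= c cs IH H; rewrite -H; auto; by rewrite -IH //; auto. Qed.

Lemma flatten_leaf s : flatten (map tlabels (map leaf s)) = s.
Proof. by elim: s => //= a s ->. Qed.

Lemma backward k : forall n T, n <= k -> good n T -> RWS_odot n T.
Proof.
elim: k => [|k IH] n T hnk hgood.
  exfalso; move: hgood => [hp hg]; have := labels_pos hg.
  by rewrite (perm_size hp) size_iota; lia.
case: T hgood => L cs hgood.
case hA: (has (fun c => ~~ red c && (1 < size (tlabels c))) cs).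
  case: (split_has hA) => cs1 [c [cs2 [e /andP [hw hs]]]]; subst cs.
  have [m [p [T1 [c' [g1 g2 hp hm e]]]]] := caseA hgood hw hs.
  have := rws_comp (IH (n - m + 1) T1 ltac:(lia) g1) (IH m c' ltac:(lia) g2) hp.
  by rewrite e (_ : n - m + 1 + m - 1 = n) //; lia.
case hB: (has red cs).
  case: (split_has hB) => cs1 [c [cs2 [e hr]]]; subst cs.
  have [m [p [T1 [c' [g1 g2 hp hm e]]]]] := caseB hgood hr.
  have := rws_comp (IH (n - m + 1) T1 ltac:(lia) g1) (IH m c' ltac:(lia) g2) hp.
  rewrite (_ : n - m + 1 + m - 1 = n); last lia.
  by move=> h; apply: rws_equiv h e.
move: (hgood) => [hp /AS_node [[[k1 k2 k3 k4] hint] hgc]]; rewrite /= in k1 k2 k3 k4.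
have hleaf : forall c, List.In c cs -> c = leaf (head 0 (tlabels c)).
  move=> c hc; apply: leaf_of; first exact: hgc.
  move: hA hB => /negbT; rewrite -all_predC => hA /negbT; rewrite -all_predC => hB.
  have := all_In (P := predC (fun c => ~~ red c && (1 < size (tlabels c)))) hA hc.
  have := all_In (P := predC red) hB hc.
  rewrite /= => /negbTE -> /=; rewrite -leqNgt; done.
set bs := map (fun c => head 0 (tlabels c)) cs.
have ecs : cs = map leaf bs by apply: map_leaf_eq.
rewrite ecs /= flatten_leaf in hp.
rewrite ecs.
case: L k1 k2 hp {k3 k4 hint hgood} => [|a [|a' L]] //= _ k2 hp.
- have hn2 : 1 < n by have := k2 isT; rewrite ecs size_map (perm_size hp) size_iota.
  have hj : n = (n - 2).+2 by lia.
  have := star_rws (n - 2); rewrite -hj => hs.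
  apply: rws_equiv hs _; apply: perm_tequiv0; apply: Perm_map.
  by apply: perm_eq_Perm; rewrite perm_sym.
- have ha : a \in iota 1 n by rewrite -(perm_mem hp) mem_head.
  rewrite mem_iota in ha.
  case: a ha hp {k2} => [|i] ha hp; first lia.
  set j := n - i.+1.
  have hn : n = i + j + 1 by rewrite /j; lia.
  have hp' : perm_eq bs (iota 1 i ++ iota i.+2 j).
    rewrite -(perm_cons i.+1); apply: (perm_trans hp).
    rewrite {1}hn (_ : i + j + 1 = i + j.+1); last lia.
    rewrite iotaD (_ : 1 + i = i.+1) //= -cat1s; apply/permP => q; rewrite !count_cat /= count_cat; lia.
  have := fan_rws i j; rewrite -hn => hs.
  apply: rws_equiv hs _; apply: perm_tequiv0; apply: Perm_map.
  by apply: perm_eq_Perm; rewrite perm_sym.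
Qed.

Theorem mainTheorem12 (n : nat) (T : rwtree) :
  RWS_odot n T <->
  [/\ RW n T, rec_labelled T, at_most_one_label T,
      avoids_pattern_i T & avoids_pattern_ii T].
Proof.
rewrite valid_good; split; first exact: forward.
by apply: (@backward n).
Qed.
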